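(* Let $T$ be a rooted binary phylogenetic tree under the $N_r$ model with state set $\{\alpha_1,\dots,\alpha_r\}$. Then for every $1\le k\le r-1$, $P_k(T)\ge Q_k(T)$.
   Context: A rooted binary phylogenetic tree is a finite tree with a distinguished root vertex $\rho$ of out-degree 2, all edges directed away from $\rho$, and every other vertex of in-degree 1 and out-degree 0 or 2; out-degree-0 vertices are leaves. Under the Neyman $r$-state model $N_r$ ($r\ge2$) on $\mathcal A=\{\alpha_1,\dots,\alpha_r\}$, each edge $e$ carries a substitution probability $p_e\in[0,\frac{r-1}{r}]$; given $F(\rho)$, states propagate independently along edges: for an edge $(u,v)$, $F(v)=F(u)$ with probability $1-p_e$, and otherwise $F(v)$ is uniform among the $r-1$ other states; $f$ is the restriction of $F$ to the leaves. Fitch sets: each leaf $x$ gets $\{f(x)\}$; a vertex with children $v_1,v_2$ gets $\mathrm{FS}(v_1)\cap\mathrm{FS}(v_2)$ if nonempty, else the union; $\mathrm{FS}(f,T)$ is the Fitch set of $\rho$. $P_k(T)=\mathbb P(\mathrm{FS}(f,T)=\mathcal R\mid F(\rho)=\alpha_1)$ for any $\mathcal R\subseteq\mathcal A$ with $\alpha_1\in\mathcal R$, $|\mathcal R|=k$, and $Q_k(T)=\mathbb P(\mathrm{FS}(f,T)=\mathcal R\mid F(\rho)=\alpha_1)$ for any $\mathcal R$ with $\alpha_1\notin\mathcal R$, $|\mathcal R|=k$ (independent of the choice of $\mathcal R$ by symmetry). *)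

(* Defs.v *)
From HB Require Import structures.
From mathcomp Require Import all_boot all_order all_algebra.
Set Implicit Arguments. Unset Strict Implicit. Unset Printing Implicit Defensive.
Import Order.TTheory GRing.Theory Num.Theory.
Local Open Scope ring_scope.

(* A rooted binary phylogenetic (sub)tree whose edges are labelled by
   substitution probabilities: [Node p1 t1 p2 t2] is a vertex with children
   t1 and t2, p1 (resp. p2) being the substitution probability of the edge
   to the root of t1 (resp. t2). Leaves are ordered left to right. *)
Inductive ptree (R : Type) :=
| Leaf : ptree R
| Node : R -> ptree R -> R -> ptree R -> ptree R.
Arguments Leaf {R}.

Definition is_node R (t : ptree R) : bool :=
  if t is Node _ _ _ _ then true else false.

Fixpoint nleaves R (t : ptree R) : nat :=
  match t with
  | Leaf => 1
  | Node _ t1 _ t2 => nleaves t1 + nleaves t2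
  end%N.

Fixpoint valid_probs (R : realFieldType) (r : nat) (t : ptree R) : bool :=
  match t with
  | Leaf => true
  | Node p1 t1 p2 t2 =>
      [&& 0 <= p1, p1 <= (r.-1)%:R / r%:R, 0 <= p2, p2 <= (r.-1)%:R / r%:R,
          @valid_probs R r t1 & @valid_probs R r t2]
  end.

Definition ntrans (R : realFieldType) (r : nat) (p : R) (a b : 'I_r) : R :=
  if a == b then 1 - p else p / (r.-1)%:R.

(* Probability that the leaves of t (left to right) carry the labelling f,
   given that the root of t is in state a. *)
Fixpoint leaf_prob (R : realFieldType) (r : nat) (t : ptree R) (a : 'I_r)
    (f : seq 'I_r) : R :=
  match t with
  | Leaf => if f is [:: x] then (x == a)%:R else 0
  | Node p1 t1 p2 t2 =>
      \sum_(b1 : 'I_r) \sum_(b2 : 'I_r)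
        @ntrans R r p1 a b1 * @ntrans R r p2 a b2 *
        (@leaf_prob R r t1 b1 (take (nleaves t1) f) *
         @leaf_prob R r t2 b2 (drop (nleaves t1) f))
  end.

Fixpoint fitch (R : Type) (r : nat) (t : ptree R) (f : seq 'I_r)
    : {set 'I_r} :=
  match t with
  | Leaf => if f is [:: x] then [set x] else set0
  | Node _ t1 _ t2 =>
      let S1 := @fitch R r t1 (take (nleaves t1) f) in
      let S2 := @fitch R r t2 (drop (nleaves t1) f) in
      if S1 :&: S2 != set0 then S1 :&: S2 else S1 :|: S2
  end.

Definition fitch_prob (R : realFieldType) (r : nat) (t : ptree R)
    (a : 'I_r) (S : {set 'I_r}) : R :=
  \sum_(f : (nleaves t).-tuple 'I_r | fitch t f == S) leaf_prob t a f.

(* Main.v *)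
Require Import Defs.
From HB Require Import structures.
From mathcomp Require Import all_boot all_order all_algebra.
From mathcomp Require Import fingroup perm.
From mathcomp Require Import ring zify.
Import Order.TTheory GRing.Theory Num.Theory.
Local Open Scope ring_scope.
Lemma sum_cat_tuple (V : nmodType) (T : finType) (n1 n2 : nat) (F : seq T -> V) :
  \sum_(f : (n1 + n2).-tuple T) F f =
  \sum_(f1 : n1.-tuple T) \sum_(f2 : n2.-tuple T) F (f1 ++ f2).
Proof.
rewrite pair_big /=.
have hb : bijective (fun q : n1.-tuple T * n2.-tuple T => cat_tuple q.1 q.2).
  apply: inj_card_bij.
    move=> [a1 a2] [b1 b2] /(congr1 val) /= /eqP.
    rewrite eqseq_cat ?size_tuple // => /andP[/eqP h1 /eqP h2].
    by congr pair; apply: val_inj.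
  by rewrite card_prod !card_tuple expnD.
by rewrite (reindex _ (onW_bij _ hb)).
Qed.

Lemma sum_tuple1 (V : nmodType) (T : finType) (F : seq T -> V) :
  \sum_(f : 1.-tuple T) F f = \sum_(x : T) F [:: x].
Proof.
have hb : bijective (fun x : T => [tuple x]).
  exists (@thead 0 T) => [x //|u].
  by apply: val_inj; case: u => [[|x [|y s]]] //=.
by rewrite (reindex _ (onW_bij _ hb)).
Qed.

Definition comb (r : nat) (S1 S2 : {set 'I_r}) : {set 'I_r} :=
  if S1 :&: S2 != set0 then S1 :&: S2 else S1 :|: S2.

Definition Hf (R : realFieldType) (r : nat) (p : R) (t : ptree R) (c : 'I_r)
  (S : {set 'I_r}) : R := \sum_(d : 'I_r) ntrans p c d * fitch_prob t d S.
Arguments Hf {R r}.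
Arguments comb {r}.

Lemma fp_leaf (R : realFieldType) (r : nat) (c : 'I_r) S :
  fitch_prob (@Leaf R) c S = (S == [set c])%:R.
Proof.
rewrite /fitch_prob big_mkcond.
rewrite (@sum_tuple1 _ _ (fun f : seq 'I_r => if fitch (@Leaf R) f == S then leaf_prob (@Leaf R) c f else 0)) /=.
rewrite (bigD1 c) //= eqxx big1 ?addr0.
  by rewrite eq_sym; case: eqP.
by move=> x /negbTE ->; case: ifP.
Qed.

Lemma collapse (R : realFieldType) (I J : finType) (F : I -> J) (G : J -> I -> R) :
  \sum_(j : J) \sum_(i | F i == j) G j i = \sum_(i : I) G (F i) i.
Proof.
rewrite (exchange_big_dep xpredT) //=; apply: eq_bigr => i _.
by rewrite (big_pred1 (F i)) // => j; rewrite /= eq_sym.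
Qed.

Lemma Hf_alt (R : realFieldType) (r : nat) (p : R) (t : ptree R) (c : 'I_r) S :
  Hf p t c S = \sum_(f : (nleaves t).-tuple 'I_r | fitch t f == S)
                 \sum_(b : 'I_r) ntrans p c b * leaf_prob t b f.
Proof.
rewrite /Hf /fitch_prob; under eq_bigr do rewrite mulr_sumr.
rewrite (exchange_big_dep xpredT) //=.
rewrite [RHS]big_mkcond; apply: eq_bigr => f _; case: (fitch t f == S) => //; exact: big_pred0.
Qed.

Lemma fp_node (R : realFieldType) (r : nat) p1 (t1 : ptree R) p2 t2 (c : 'I_r) S :
  fitch_prob (Node p1 t1 p2 t2) c S =
  \sum_(S1 : {set 'I_r}) \sum_(S2 : {set 'I_r})
     (comb S1 S2 == S)%:R * (Hf p1 t1 c S1 * Hf p2 t2 c S2).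
Proof.
under eq_bigr => S1 _ do under eq_bigr => S2 _ do
  rewrite !Hf_alt big_distrlr mulr_sumr /=.
under eq_bigr => S1 _ do under eq_bigr => S2 _ do
  under eq_bigr => f1 _ do rewrite mulr_sumr.
under eq_bigr => S1 _ do rewrite exchange_big.
under eq_bigr => S1 _ do under eq_bigr => f1 _ do rewrite collapse.
rewrite collapse.
rewrite /fitch_prob big_mkcond /=.
rewrite (@sum_cat_tuple _ _ _ _ (fun f : seq 'I_r => if fitch (Node p1 t1 p2 t2) f == S then leaf_prob (Node p1 t1 p2 t2) c f else 0)) /=.
apply: eq_bigr => f1 _; apply: eq_bigr => f2 _.
rewrite take_size_cat ?size_tuple // drop_size_cat ?size_tuple //.
rewrite /comb; case: eqP => _; last by rewrite mul0r.
rewrite mul1r big_distrlr /=; apply: eq_bigr => b1 _; apply: eq_bigr => b2 _.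
by rewrite mulrACA.
Qed.

Lemma nt_ge0 (R : realFieldType) (r : nat) (hr : (1 < r)%N) (p : R)
  (hp0 : 0 <= p) (hp1 : p <= (r.-1)%:R / r%:R) (a b : 'I_r) : 0 <= ntrans p a b.
Proof.
rewrite /ntrans; case: eqP => _; last by rewrite divr_ge0 // ler0n.
rewrite subr_ge0 (le_trans hp1) // ler_pdivrMr ?ltr0n ?mul1r ?ler_nat ?leq_pred //.
by rewrite (ltn_trans _ hr).
Qed.

Lemma lp_ge0 (R : realFieldType) (r : nat) (hr : (1 < r)%N) (t : ptree R) :
  valid_probs r t -> forall (a : 'I_r) f, 0 <= leaf_prob t a f.
Proof.
elim: t => [|p1 t1 IH1 p2 t2 IH2] /=.
  by move=> _ a [|x [|y s]] //=; rewrite ler0n.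
case/and5P => h1 h2 h3 h4 /andP[v1 v2] a f.
apply: sumr_ge0 => b1 _; apply: sumr_ge0 => b2 _.
by rewrite !mulr_ge0 ?nt_ge0 ?IH1 ?IH2.
Qed.

Lemma fp_ge0 (R : realFieldType) (r : nat) (hr : (1 < r)%N) (t : ptree R) :
  valid_probs r t -> forall (a : 'I_r) S, 0 <= fitch_prob t a S.
Proof. by move=> v a S; apply: sumr_ge0 => f _; apply: lp_ge0. Qed.

Lemma Hf_ge0 (R : realFieldType) (r : nat) (hr : (1 < r)%N) (p : R) (t : ptree R) :
  0 <= p -> p <= (r.-1)%:R / r%:R ->
  valid_probs r t -> forall (a : 'I_r) S, 0 <= Hf p t a S.
Proof.
by move=> hp0 hp1 v a S; apply: sumr_ge0 => d _; rewrite mulr_ge0 ?nt_ge0 ?fp_ge0.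
Qed.

Lemma Hf_closed (R : realFieldType) (r : nat) (p : R) (t : ptree R) (c : 'I_r) S :
  Hf p t c S = (1 - p - p / (r.-1)%:R) * fitch_prob t c S +
               p / (r.-1)%:R * \sum_(d : 'I_r) fitch_prob t d S.
Proof.
rewrite /Hf.
have -> : \sum_d ntrans p c d * fitch_prob t d S =
   \sum_d (((c == d)%:R * (1 - p - p / (r.-1)%:R)) * fitch_prob t d S +
           p / (r.-1)%:R * fitch_prob t d S).
  apply: eq_bigr => d _; rewrite /ntrans; case: eqP => _.
    by rewrite mul1r -mulrDl subrK.
  by rewrite mul0r mul0r add0r.
rewrite big_split /= -mulr_sumr; congr (_ + _).
rewrite (bigD1 c) //= eqxx mul1r big1 ?addr0 // => d /negbTE.
by rewrite eq_sym => ->; rewrite !mul0r.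
Qed.

Lemma kappa_ge0 (R : realFieldType) (r : nat) (hr : (1 < r)%N) (p : R) :
  0 <= p -> p <= (r.-1)%:R / r%:R -> 0 <= 1 - p - p / (r.-1)%:R.
Proof.
move=> hp0 hp1.
have m0 : 0 < (r.-1)%:R :> R by rewrite ltr0n -ltnS prednK // (ltn_trans _ hr).
have rE : r%:R = (r.-1)%:R + 1 :> R by rewrite natr1 prednK // (ltn_trans _ hr).
rewrite rE ler_pdivlMr ?(lt_le_trans m0) ?lerDl // in hp1.
have -> : 1 - p - p / (r.-1)%:R = ((r.-1)%:R - p * ((r.-1)%:R + 1)) / (r.-1)%:R.
  by field; rewrite gt_eqF.
by rewrite divr_ge0 ?subr_ge0 // ltW.
Qed.

Lemma comb_perm (r : nat) (s : {perm 'I_r}) (S1 S2 : {set 'I_r}) :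
  comb (s @: S1) (s @: S2) = s @: comb S1 S2.
Proof.
rewrite /comb -imsetI; last by move=> x y _ _; apply: perm_inj.
by rewrite imset_eq0; case: ifP => _ //; rewrite imsetU.
Qed.

Lemma fp_perm (R : realFieldType) (r : nat) (t : ptree R) :
  forall (s : {perm 'I_r}) (c : 'I_r) (S : {set 'I_r}),
  fitch_prob t (s c) (s @: S) = fitch_prob t c S.
Proof.
elim: t => [|p1 t1 IH1 p2 t2 IH2] s c S.
  by rewrite !fp_leaf -imset_set1 (inj_eq (imset_inj (@perm_inj _ s))).
have Hp : forall (p : R) (t : ptree R), (forall c (S : {set 'I_r}), fitch_prob t (s c) (s @: S) = fitch_prob t c S) ->
   forall c (S : {set 'I_r}), Hf p t (s c) (s @: S) = Hf p t c S.
  move=> p t IH c' S'; rewrite /Hf (reindex_inj (@perm_inj _ s)).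
  by apply: eq_bigr => d _; rewrite IH /ntrans (inj_eq (@perm_inj _ s)).
rewrite !fp_node (reindex_inj (imset_inj (@perm_inj _ s))).
apply: eq_bigr => S1 _; rewrite (reindex_inj (imset_inj (@perm_inj _ s))).
apply: eq_bigr => S2 _.
by rewrite comb_perm (inj_eq (imset_inj (@perm_inj _ s))) !Hp.
Qed.

Lemma Hf_perm (R : realFieldType) (r : nat) (p : R) (t : ptree R)
  (s : {perm 'I_r}) (c : 'I_r) (S : {set 'I_r}) : Hf p t (s c) (s @: S) = Hf p t c S.
Proof.
rewrite /Hf (reindex_inj (@perm_inj _ s)).
by apply: eq_bigr => d _; rewrite fp_perm /ntrans (inj_eq (@perm_inj _ s)).
Qed.

Lemma tperm_fix (r : nat) (x y : 'I_r) (X : {set 'I_r}) :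
  (x \in X) = (y \in X) -> tperm x y @: X = X.
Proof.
move=> hxy; apply/setP => z.
rewrite -{1}(tpermK x y z) mem_imset; last exact: perm_inj.
by case: tpermP => [->|->|] //; rewrite hxy.
Qed.

Lemma Hf_mono (R : realFieldType) (r : nat) (hr : (1 < r)%N) (p : R) (t : ptree R) :
  0 <= p -> p <= (r.-1)%:R / r%:R ->
  (forall (a b : 'I_r) (S : {set 'I_r}), a \notin S -> b \in S ->
      fitch_prob t a S <= fitch_prob t b S) ->
  forall (a b : 'I_r) (S : {set 'I_r}), (a \in S -> b \in S) -> Hf p t a S <= Hf p t b S.
Proof.
move=> hp0 hp1 IH a b S hab.
case: (boolP (a \in S)) => ha; last case: (boolP (b \in S)) => hb.
- have := @Hf_perm _ _ p t (tperm a b) a S.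
  by rewrite tpermL (@tperm_fix _ a b S) ?hab ?ha // => ->.
- rewrite !Hf_closed lerD2r ler_wpM2l ?kappa_ge0 //; exact: IH.
- have := @Hf_perm _ _ p t (tperm a b) a S.
  by rewrite tpermL (@tperm_fix _ a b S) ?(negbTE ha) ?(negbTE hb) // => ->.
Qed.

Lemma fp_mono (R : realFieldType) (r : nat) (hr : (1 < r)%N) (t : ptree R) :
  valid_probs r t ->
  forall (a b : 'I_r) (S : {set 'I_r}), a \notin S -> b \in S ->
      fitch_prob t a S <= fitch_prob t b S.
Proof.
elim: t => [|p1 t1 IH1 p2 t2 IH2] /=.
  move=> _ a b S ha hb; rewrite !fp_leaf.
  have -> : (S == [set a]) = false.
    by apply/negbTE; apply: contraNneq ha => ->; rewrite set11.
  by rewrite ler0n.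
case/and5P => h1 h2 h3 h4 /andP[v1 v2] a b S ha hb.
rewrite !fp_node; apply: ler_sum => S1 _; apply: ler_sum => S2 _.
case: eqP => hc; last by rewrite !mul0r.
rewrite !mul1r.
have [i1 i2] : (a \in S1 -> b \in S1) /\ (a \in S2 -> b \in S2).
  move: hc; rewrite /comb; case: ifP => _ hc.
    by move: hb; rewrite -hc inE => /andP[-> ->].
  by move: ha; rewrite -hc inE negb_or => /andP[/negbTE -> /negbTE ->].
apply: ler_pM; rewrite ?(@Hf_ge0 R r hr) //.
  by apply: (@Hf_mono R r hr) => //; apply: IH1.
by apply: (@Hf_mono R r hr) => //; apply: IH2.
Qed.

Lemma exists_perm (T : finType) (A B : {set T}) :
  #|A| = #|B| -> exists s : {perm T}, s @: A = B.
Proof.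
move eqn: #|A :\: B| => n; elim: n A eqn => [|n IH] A hn hAB.
  exists 1%g; apply/eqP; rewrite eqEcard.
  have -> : [set (1%g : {perm T}) z | z in A] = A.
    by rewrite (eq_imset _ (@perm1 _)) imset_id.
  by rewrite -setD_eq0 -cards_eq0 hn /= hAB.
have [x hx] : exists x, x \in A :\: B by apply/set0Pn; rewrite -cards_eq0 hn.
have [y hy] : exists y, y \in B :\: A.
  apply/set0Pn; rewrite -cards_eq0.
  have h1 := cardsID B A; have h2 := cardsID A B.
  rewrite setIC in h1; apply/eqP => h0; rewrite h0 hn in h1 h2; lia.
move: hx hy; rewrite !inE => /andP[xB xA] /andP[yA yB].
have E : (tperm x y @: A) :\: B = (A :\: B) :\ x.
  apply/setP => z; rewrite !inE -[z in z \in tperm x y @: A](tpermK x y) mem_imset;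
    last exact: perm_inj.
  case: tpermP => [->|->|nx ny].
  - by rewrite eqxx (negbTE yA) andbF.
  - by rewrite yB /= andbF.
  - by rewrite (introF eqP nx).
have [s hs] : exists s : {perm T}, s @: (tperm x y @: A) = B.
  apply: IH; last by rewrite card_imset //; exact: perm_inj.
  rewrite E; move: hn; rewrite (cardsD1 x (A :\: B)) in_setD xA xB /= add1n; by case.
exists (tperm x y * s)%g; rewrite -hs -imset_comp; apply: eq_imset => z.
by rewrite permM.
Qed.

Theorem theorem6 (R : realFieldType) (r : nat) (hr : (1 < r)%N)
    (t : ptree R) (ht : is_node t) (hp : valid_probs r t)
    (k : nat) (hk1 : (1 <= k)%N) (hk2 : (k <= r - 1)%N)
    (SP SQ : {set 'I_r}) :
  let alpha1 : 'I_r := Ordinal (ltnW hr) in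
  alpha1 \in SP -> #|SP| = k ->
  alpha1 \notin SQ -> #|SQ| = k ->
  fitch_prob t alpha1 SQ <= fitch_prob t alpha1 SP.
Proof.
move=> alpha1 hP cP hQ cQ.
have [b hb] : exists b, b \in SQ by apply/set0Pn; rewrite -cards_eq0 cQ -lt0n.
have h1 := @fp_mono R r hr t hp _ _ _ hQ hb.
have [s hs] := @exists_perm _ SQ SP (etrans cQ (esym cP)).
have e1 : fitch_prob t b SQ = fitch_prob t (s b) SP by rewrite -hs fp_perm.
have sbP : s b \in SP by rewrite -hs mem_imset //; exact: perm_inj.
have e2 : fitch_prob t (s b) SP = fitch_prob t alpha1 SP.
  have := @fp_perm R r t (tperm (s b) alpha1) (s b) SP.
  by rewrite tpermL (@tperm_fix _ (s b) alpha1 SP) ?sbP ?hP.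
by rewrite (le_trans h1) // e1 e2.
Qed.
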